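(* In the model described in the context, suppose $\triangle C=0$, and let $X(0)$ be the set of symmetric Stackelberg equilibria (symmetric leader reactions when all followers' forward positions are $0$), which depends on $\alpha_x$. (1) There exists a unique $\bar y<k$ such that, for $y\in[0,k]$, there exists $x\in X(0)$ with $y_j(\mathbf0,x\mathbf1)=y$ if and only if $y\le\bar y$ or $y=k$. Moreover $\bar y=\big(1+O(\tfrac1{\sqrt N})\big)\frac k2$. (2) There exists a unique $\bar\alpha_x\in\mathbb{R}_+$ such that $\alpha_x\le\bar\alpha_x$ iff there exists $x\in X(0)$ with $y_j(\mathbf0,x\mathbf1)\le\bar y$, and a unique $\underline\alpha_x\le\bar\alpha_x$ such that $\alpha_x\ge\underline\alpha_x$ iff there exists $x\in X(0)$ with $y_j(\mathbf0,x\mathbf1)=k$. Moreover $|X(0)|=2$ for all $\alpha_x\in[\underline\alpha_x,\bar\alpha_x]$.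
   Context: Model: $M\ge1$ leaders and $N\ge2$ followers; inverse demand $P(q)=\alpha-\beta q$, $\alpha,\beta>0$; leader marginal cost $C$, follower marginal cost $c$, $c\ge C>0$; follower capacity $k>0$. Leader $i$ produces $x_i\ge0$; follower $j$ has forward position $f_j\in\mathbb{R}$ and chooses spot production $y_j\in[0,k]$. Given $\mathbf f,\mathbf x$, the spot market is the game among followers where follower $j$ chooses $y_j\in[0,k]$ to maximize $P(\sum_ix_i+\sum_{j'}y_{j'})(y_j-f_j)-cy_j$; its unique Nash equilibrium is $\mathbf y(\mathbf f,\mathbf x)=(y_1(\mathbf f,\mathbf x),\dots,y_N(\mathbf f,\mathbf x))$. Leader $i$'s payoff is $\psi_i=(P(\sum_ix_i+\sum_{j'}y_{j'}(\mathbf f,\mathbf x))-C)x_i$; $\psi_i(\bar x;x\mathbf1,\mathbf f)$ denotes this payoff when leader $i$ produces $\bar x$ and all other leaders produce $x$. $X(0)=\{x\in\mathbb{R}_+:\psi_i(x;x\mathbf1,\mathbf0)\ge\psi_i(\bar x;x\mathbf1,\mathbf0)\ \forall\bar x\in\mathbb{R}_+,\ \forall i\}$. $\alpha_x=(\alpha-C)/\beta$, $\triangle C=(c-C)/\beta$. $O(\cdot)$ is standard Landau notation. *)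

(* Defs.v *)
From Stdlib Require Import Reals Lra ClassicalEpsilon.
Open Scope R_scope.

Fixpoint rsum (n : nat) (f : nat -> R) : R :=
  match n with O => 0 | S m => rsum m f + f m end.

Definition upd (f : nat -> R) (j : nat) (z : R) : nat -> R :=
  fun j' => if Nat.eqb j' j then z else f j'.

Definition Pd (alpha beta q : R) : R := alpha - beta * q.

Definition alpha_x (alpha beta C : R) : R := (alpha - C) / beta.
Definition deltaC (beta C c : R) : R := (c - C) / beta.

Definition follower_payoff (alpha beta c : R) (M N : nat)
  (f x y : nat -> R) (j : nat) : R :=
  Pd alpha beta (rsum M x + rsum N y) * (y j - f j) - c * y j.

Definition is_spot_NE (alpha beta c k : R) (M N : nat) (f x y : nat -> R) : Prop :=
  (forall j, (j < N)%nat -> 0 <= y j <= k) /\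
  (forall j, (j < N)%nat -> forall z, 0 <= z <= k ->
     follower_payoff alpha beta c M N f x (upd y j z) j
       <= follower_payoff alpha beta c M N f x y j).

(* y(f,x): THE spot market equilibrium (unique by the model's standing claim);
   chosen by Hilbert's epsilon. *)
Definition spot_eq (alpha beta c k : R) (M N : nat) (f x : nat -> R) : nat -> R :=
  epsilon (inhabits (fun _ => 0)) (is_spot_NE alpha beta c k M N f x).

Definition psi (alpha beta C c k : R) (M N : nat) (i : nat) (xb x : R) (f : nat -> R) : R :=
  let xs := upd (fun _ => x) i xb in
  (Pd alpha beta (rsum M xs + rsum N (spot_eq alpha beta c k M N f xs)) - C) * xb.

Definition inX0 (alpha beta C c k : R) (M N : nat) (x : R) : Prop :=
  0 <= x /\
  forall xb, 0 <= xb -> forall i, (i < M)%nat ->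
    psi alpha beta C c k M N i xb x (fun _ => 0) <= psi alpha beta C c k M N i x x (fun _ => 0).

Definition yj0 (alpha beta c k : R) (M N : nat) (x : R) (j : nat) : R :=
  spot_eq alpha beta c k M N (fun _ => 0) (fun _ => x) j.

Definition P1 (beta C c k : R) (M N : nat) (yb : R) : Prop :=
  forall j, (j < N)%nat -> forall y, 0 <= y <= k ->
    ((exists alpha, 0 < alpha /\ exists x,
        inX0 alpha beta C c k M N x /\ yj0 alpha beta c k M N x j = y)
     <-> (y <= yb \/ y = k)).

Definition P2up (beta C c k : R) (M N : nat) (yb ab : R) : Prop :=
  forall alpha, 0 < alpha -> forall j, (j < N)%nat ->
    (alpha_x alpha beta C <= ab <->
     exists x, inX0 alpha beta C c k M N x /\ yj0 alpha beta c k M N x j <= yb).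

Definition P2low (beta C c k : R) (M N : nat) (al : R) : Prop :=
  forall alpha, 0 < alpha -> forall j, (j < N)%nat ->
    (al <= alpha_x alpha beta C <->
     exists x, inX0 alpha beta C c k M N x /\ yj0 alpha beta c k M N x j = k).

Definition X0_card2 (alpha beta C c k : R) (M N : nat) : Prop :=
  exists x1 x2, x1 <> x2 /\
    forall x, inX0 alpha beta C c k M N x <-> (x = x1 \/ x = x2).

(* Main.v *)
Require Import Defs.
From Stdlib Require Import Reals Lra Lia Psatz ClassicalEpsilon.
Open Scope R_scope.


Lemma rsum_ext n f h : (forall j, (j < n)%nat -> f j = h j) -> rsum n f = rsum n h.
Proof.
  induction n; intros H; simpl; auto.
  rewrite IHn by (intros; apply H; lia). rewrite H by lia. reflexivity.
Qed.

Lemma rsum_const_on n f v : (forall j, (j < n)%nat -> f j = v) -> rsum n f = INR n * v.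
Proof.
  induction n; intros H; cbn [rsum]; [simpl; ring|].
  rewrite IHn by (intros; apply H; lia). rewrite H by lia. rewrite S_INR. ring.
Qed.

Lemma rsum_upd n f i z : (i < n)%nat -> rsum n (upd f i z) = rsum n f - f i + z.
Proof.
  induction n; intros Hi; [lia|]. simpl.
  destruct (Nat.eq_dec i n) as [->|Hne].
  - rewrite (rsum_ext n (upd f n z) f).
    + unfold upd. rewrite Nat.eqb_refl. ring.
    + intros j Hj. unfold upd. destruct (Nat.eqb_spec j n); [lia|auto].
  - rewrite IHn by lia. unfold upd at 1.
    destruct (Nat.eqb_spec n i); [lia|]. ring.
Qed.

Ltac fn := repeat match goal with H : ~ _ <= _ |- _ => apply Rnot_le_lt in H end.

Definition cl (k v : R) : R := if Rle_dec v 0 then 0 else if Rle_dec k v then k else v.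

Lemma cl_bounds k v : 0 < k -> 0 <= cl k v <= k.
Proof. intros; unfold cl; destruct Rle_dec; fn; [lra|]; destruct Rle_dec; fn; lra. Qed.
Lemma cl_neg k v : v <= 0 -> cl k v = 0.
Proof. intros; unfold cl; destruct Rle_dec; fn; lra. Qed.
Lemma cl_mid k v : 0 <= v <= k -> cl k v = v.
Proof. intros; unfold cl; destruct Rle_dec; fn; [lra|]; destruct Rle_dec; fn; lra. Qed.
Lemma cl_hi k v : 0 < k -> k <= v -> cl k v = k.
Proof. intros; unfold cl; destruct Rle_dec; fn; [lra|]; destruct Rle_dec; fn; lra. Qed.
Lemma cl_le k v b : 0 < k -> 0 <= b -> v <= b -> cl k v <= b.
Proof. intros; unfold cl; destruct Rle_dec; fn; [lra|]; destruct Rle_dec; fn; lra. Qed.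
Lemma cl_eq_k k v : 0 < k -> cl k v = k -> k <= v.
Proof. intros; unfold cl in *; destruct Rle_dec; fn; [lra|]; destruct Rle_dec; fn; lra. Qed.

Lemma clamp_dev k d w z : 0 < k -> w = cl k d -> 0 <= z <= k -> (z - w) * (d - z) <= 0.
Proof.
  intros Hk -> Hz. unfold cl; destruct Rle_dec; fn; [nra|]; destruct Rle_dec; fn.
  - assert (0 <= d - z) by lra. assert (0 <= k - z) by lra. nra.
  - pose proof (Rle_0_sqr (z-d)); unfold Rsqr in *; nra.
Qed.

Lemma dev_clamp k d y : 0 < k -> 0 <= y <= k ->
  (forall z, 0 <= z <= k -> (z - y) * (d - z) <= 0) -> y = cl k d.
Proof.
  intros Hk Hy H. unfold cl; destruct Rle_dec; fn.
  - specialize (H (y/2) ltac:(lra)). nra.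
  - destruct Rle_dec; fn.
    + specialize (H ((y+k)/2) ltac:(lra)). nra.
    + specialize (H ((y+d)/2) ltac:(lra)). pose proof (Rle_0_sqr (y-d)); unfold Rsqr in *; nra.
Qed.

Lemma cl_fix k n A v : 0 < k -> 0 <= n -> v = cl k (A - n * v) -> v = cl k (A / (n+1)).
Proof.
  intros Hk Hn Hv.
  assert (HA : A = (n+1) * (A/(n+1))) by (field; lra).
  set (q := A/(n+1)) in *.
  pose proof (cl_bounds k (A - n*v) Hk) as Hb.
  unfold cl in Hv |- *.
  destruct (Rle_dec (A - n*v) 0); destruct (Rle_dec q 0); try destruct (Rle_dec k q);
  try destruct (Rle_dec k (A - n*v)); fn; nra.
Qed.

Lemma cl_fix_inv k n A : 0 < k -> 0 <= n -> cl k (A/(n+1)) = cl k (A - n * cl k (A/(n+1))).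
Proof.
  intros Hk Hn.
  assert (HA : A = (n+1) * (A/(n+1))) by (field; lra).
  set (q := A/(n+1)) in *.
  unfold cl at 1 3.
  destruct (Rle_dec q 0); fn.
  - rewrite cl_neg; lra || nra.
  - destruct (Rle_dec k q); fn.
    + rewrite cl_hi; nra.
    + rewrite cl_mid; nra.
Qed.


Lemma payoff_diff alpha beta c M N xs y j z : 0 < beta -> (j < N)%nat ->
  follower_payoff alpha beta c M N (fun _ => 0) xs (upd y j z) j
  - follower_payoff alpha beta c M N (fun _ => 0) xs y j
  = beta * ((z - y j) * ((alpha - c)/beta - rsum M xs - rsum N y - z)).
Proof.
  intros Hb Hj. unfold follower_payoff, Pd. rewrite rsum_upd by exact Hj.
  replace (upd y j z j) with z by (unfold upd; now rewrite Nat.eqb_refl). field. lra.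
Qed.

Lemma spot_char alpha beta c k M N xs j : 0 < beta -> 0 < k -> (j < N)%nat ->
  spot_eq alpha beta c k M N (fun _ => 0) xs j
  = cl k (((alpha - c)/beta - rsum M xs) / (INR N + 1)).
Proof.
  intros Hb Hk Hj.
  set (A := (alpha - c)/beta - rsum M xs).
  set (w := cl k (A / (INR N + 1))).
  assert (Hn : 0 <= INR N) by apply pos_INR.
  assert (NE0 : is_spot_NE alpha beta c k M N (fun _ => 0) xs (fun _ => w)).
  { split.
    - intros; apply cl_bounds; auto.
    - intros j' Hj' z Hz.
      pose proof (payoff_diff alpha beta c M N xs (fun _ => w) j' z Hb Hj') as E.
      rewrite (rsum_const_on N (fun _ => w) w) in E by auto.
      assert (Hw : w = cl k (A - INR N * w)) by (unfold w; apply cl_fix_inv; auto).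
      pose proof (clamp_dev k (A - INR N * w) w z Hk Hw Hz).
      unfold A in *.
      set (X := (z - w) * ((alpha - c) / beta - rsum M xs - INR N * w - z)) in *.
      assert (0 <= beta * (- X)) by (apply Rmult_le_pos; lra). lra. }
  assert (Hs := epsilon_spec (inhabits (fun _ : nat => 0)) (is_spot_NE alpha beta c k M N (fun _ => 0) xs)
                 (ex_intro _ _ NE0)).
  fold (spot_eq alpha beta c k M N (fun _ => 0) xs) in Hs.
  set (y := spot_eq alpha beta c k M N (fun _ => 0) xs) in *.
  destruct Hs as [Hbd Hdev].
  set (d := A - rsum N y).
  assert (Hall : forall j', (j' < N)%nat -> y j' = cl k d).
  { intros j' Hj'. apply dev_clamp; auto.
    intros z Hz. specialize (Hdev j' Hj' z Hz).
    pose proof (payoff_diff alpha beta c M N xs y j' z Hb Hj') as E.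
    unfold d, A.
    set (X := (z - y j') * ((alpha - c) / beta - rsum M xs - rsum N y - z)) in *.
    assert (beta * X <= 0) by lra.
    destruct (Rle_dec X 0) as [|Hx]; [lra|]. fn.
    assert (0 < beta * X) by (apply Rmult_lt_0_compat; lra). lra. }
  assert (HY : rsum N y = INR N * cl k d) by (apply rsum_const_on; auto).
  rewrite Hall by auto.
  assert (Hd: d = A - INR N * cl k d) by (unfold d at 1; rewrite HY; reflexivity).
  apply cl_fix; auto. rewrite <- Hd. reflexivity.
Qed.


Definition g (n k u : R) := u - n * cl k (u/(n+1)).
Definition PP (n k S xb : R) := xb * g n k (S - xb).
Definition opt (n k S x : R) := forall xb, 0 <= xb -> PP n k S xb <= PP n k S x.

Lemma psi_eq alpha beta C k M N i xb x : (i < M)%nat -> 0 < beta -> 0 < k ->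
  psi alpha beta C C k M N i xb x (fun _ => 0)
  = beta * PP (INR N) k ((alpha - C)/beta - (INR M - 1) * x) xb.
Proof.
  intros Hi Hb Hk. unfold psi; cbv zeta.
  set (xs := upd (fun _ => x) i xb).
  assert (HX : rsum M xs = INR M * x - x + xb).
  { unfold xs. rewrite rsum_upd by auto. rewrite (rsum_const_on M (fun _ => x) x) by auto. ring. }
  assert (HY : rsum N (spot_eq alpha beta C k M N (fun _ => 0) xs)
     = INR N * cl k (((alpha - C)/beta - rsum M xs)/(INR N+1)))
    by (apply rsum_const_on; intros; apply spot_char; auto).
  rewrite HY, HX. unfold PP, g, Pd.
  replace ((alpha - C) / beta - (INR M - 1) * x - xb) with ((alpha - C) / beta - (INR M * x - x + xb)) by ring.
  field. lra.
Qed.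

Lemma yj0_eq alpha beta c k M N x j : (j < N)%nat -> 0 < beta -> 0 < k ->
  yj0 alpha beta c k M N x j = cl k (((alpha - c)/beta - INR M * x)/(INR N + 1)).
Proof.
  intros Hj Hb Hk. unfold yj0. rewrite spot_char by auto.
  rewrite (rsum_const_on M (fun _ => x) x) by auto. reflexivity.
Qed.

Lemma inX0_iff alpha beta C k M N x : (1 <= M)%nat -> 0 < beta -> 0 < k ->
  inX0 alpha beta C C k M N x <->
  (0 <= x /\ opt (INR N) k ((alpha - C)/beta - (INR M - 1) * x) x).
Proof.
  intros HM Hb Hk. unfold inX0. split.
  - intros [Hx H]. split; auto. intros xb Hxb.
    specialize (H xb Hxb 0%nat ltac:(lia)). rewrite !psi_eq in H by (auto; lia).
    apply Rmult_le_reg_l in H; auto.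
  - intros [Hx H]. split; auto. intros xb Hxb i Hi.
    rewrite !psi_eq by auto. apply Rmult_le_compat_l; [lra|]. auto.
Qed.


Lemma divq u n : 0 <= n -> u = (n+1) * (u/(n+1)).
Proof. intros; field; lra. Qed.

Lemma g_neg n k u : 0 <= n -> 0 < k -> u <= 0 -> g n k u = u.
Proof.
  intros Hn Hk Hu. pose proof (divq u n Hn). set (q := u/(n+1)) in *.
  unfold g; fold q; rewrite cl_neg; [ring|nra].
Qed.

Lemma g_mid n k u : 0 <= n -> 0 < k -> 0 <= u <= (n+1)*k -> g n k u = u/(n+1).
Proof.
  intros Hn Hk Hu. pose proof (divq u n Hn). set (q := u/(n+1)) in *.
  unfold g; fold q; rewrite cl_mid; nra.
Qed.

Lemma g_hi n k u : 0 <= n -> 0 < k -> (n+1)*k <= u -> g n k u = u - n*k.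
Proof.
  intros Hn Hk Hu. pose proof (divq u n Hn). set (q := u/(n+1)) in *.
  unfold g; fold q; rewrite cl_hi; nra.
Qed.

Lemma g_low1 n k u : 0 <= n -> 0 < k -> 0 <= u -> u/(n+1) <= g n k u.
Proof.
  intros Hn Hk Hu. destruct (Rle_dec u ((n+1)*k)); fn.
  - rewrite g_mid; auto; lra.
  - rewrite g_hi; auto; [|lra]. pose proof (divq u n Hn). set (q := u/(n+1)) in *. nra.
Qed.

Lemma g_low2 n k u : 0 <= n -> 0 < k -> u - n*k <= g n k u.
Proof.
  intros Hn Hk. unfold g. pose proof (cl_bounds k (u/(n+1)) Hk). nra.
Qed.

Lemma g_up n k u : 0 <= n -> 0 < k -> g n k u <= u/(n+1) \/ g n k u = u - n*k.
Proof.
  intros Hn Hk. destruct (Rle_dec u 0); fn.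
  - left. rewrite g_neg; auto. pose proof (divq u n Hn). set (q := u/(n+1)) in *. nra.
  - destruct (Rle_dec u ((n+1)*k)); fn.
    + left. rewrite g_mid; auto; lra.
    + right. apply g_hi; auto; lra.
Qed.

Lemma m_gt1 n m : 1 <= n -> 0 < m -> m*m = n+1 -> 1 < m.
Proof. intros; nra. Qed.

Lemma sq_le a b : 0 <= b -> a*a <= b*b -> a <= b.
Proof. intros. destruct (Rle_dec a b); fn; [lra|nra]. Qed.

Lemma Bopt n k m S : 1 <= n -> 0 < k -> 0 < m -> m*m = n+1 ->
  0 <= S <= k*m*(m+1) -> opt n k S (S/2).
Proof.
  intros Hn Hk Hm Hmm HS xb Hxb. pose proof (m_gt1 n m Hn Hm Hmm) as Hm1.
  assert (Hkm : 0 <= k*m*(m-1)) by (apply Rmult_le_pos; [apply Rmult_le_pos|]; lra).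
  unfold PP. replace (S - S/2) with (S/2) by field.
  rewrite (g_mid n k (S/2)); [|lra|lra|split; [lra|]; rewrite <- Hmm; nra].
  set (q := /(n+1)).
  assert (Hq : q * (m*m) = 1) by (unfold q; rewrite Hmm; field; lra).
  assert (Hq0 : 0 < q) by (unfold q; apply Rinv_0_lt_compat; lra).
  unfold Rdiv; fold q.
  destruct (g_up n k (S - xb)) as [H|H]; try lra.
  - unfold Rdiv in H; fold q in H.
    apply Rle_trans with (xb * ((S - xb) * q)); [apply Rmult_le_compat_l; lra|].
    pose proof (Rle_0_sqr (xb - S/2)); unfold Rsqr in *.
    assert (0 <= ((S * /2) * (S*/2) - xb*(S-xb)) * q) by (apply Rmult_le_pos; nra). nra.
  - rewrite H.
    assert (0 <= S * / 2 * (S * / 2 * q)) by (apply Rmult_le_pos; [lra|apply Rmult_le_pos; lra]).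
    destruct (Rle_dec S (n*k)); fn; [nra|].
    pose proof (Rle_0_sqr (xb - (S - n*k)/2)); unfold Rsqr in *.
    assert (HH1 : xb * (S - xb - n*k) <= (S - n*k)*(S-n*k)/4) by nra.
    assert (HH2 : m*(S - n*k) <= S).
    { assert ((m-1)*S <= (m-1)*(k*m*(m+1))) by (apply Rmult_le_compat_l; lra). nra. }
    assert (HH3 : (m*(S-n*k))*(m*(S-n*k)) <= S*S).
    { apply Rmult_le_compat; nra. }
    assert (HH4 : (S - n*k)*(S-n*k) <= S*S*q).
    { assert (E: q*((m*(S-n*k))*(m*(S-n*k))) = (S-n*k)*(S-n*k)) by (transitivity ((q*(m*m))*((S-n*k)*(S-n*k))); [ring| rewrite Hq; ring]).
      rewrite <- E.
      rewrite (Rmult_comm (S*S) q). apply Rmult_le_compat_l; lra. }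
    nra.
Qed.

Lemma Copt n k m S : 1 <= n -> 0 < k -> 0 < m -> m*m = n+1 ->
  k*m*(m+1) <= S -> opt n k S ((S - n*k)/2).
Proof.
  intros Hn Hk Hm Hmm HS xb Hxb. pose proof (m_gt1 n m Hn Hm Hmm) as Hm1.
  assert (Hkm : 0 <= k*(m-1)) by (apply Rmult_le_pos; lra).
  assert (HSb : (n+2)*k <= S) by (replace (n+2) with (m*m+1) by lra; nra).
  unfold PP.
  rewrite (g_hi n k (S - (S - n*k)/2)); [|lra|lra|lra].
  replace (S - (S - n * k) / 2 - n * k) with ((S - n*k)/2) by field.
  set (q := /(n+1)).
  assert (Hq : q * (m*m) = 1) by (unfold q; rewrite Hmm; field; lra).
  assert (Hq0 : 0 < q) by (unfold q; apply Rinv_0_lt_compat; lra).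
  destruct (g_up n k (S - xb)) as [H|H]; try lra.
  - unfold Rdiv in H; fold q in H.
    apply Rle_trans with (xb * ((S - xb) * q)); [apply Rmult_le_compat_l; lra|].
    pose proof (Rle_0_sqr (xb - S/2)); unfold Rsqr in *.
    assert (HH1 : xb * ((S - xb) * q) <= (S*S/4)*q) by (rewrite <- Rmult_assoc; apply Rmult_le_compat_r; nra).
    assert (HH2 : S <= m*(S - n*k)).
    { assert ((m-1)*(k*m*(m+1)) <= (m-1)*S) by (apply Rmult_le_compat_l; lra). nra. }
    assert (HH3 : S*S <= (m*(S-n*k))*(m*(S-n*k))) by (apply Rmult_le_compat; nra).
    assert (E: q*((m*(S-n*k))*(m*(S-n*k))) = (S-n*k)*(S-n*k)) by (transitivity ((q*(m*m))*((S-n*k)*(S-n*k))); [ring| rewrite Hq; ring]).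
    assert (HH4 : S*S*q <= (S-n*k)*(S-n*k)).
    { rewrite <- E. rewrite (Rmult_comm (S*S) q). apply Rmult_le_compat_l; lra. }
    nra.
  - rewrite H. pose proof (Rle_0_sqr (xb - (S - n*k)/2)); unfold Rsqr in *. nra.
Qed.

Lemma PP_low1 n k S xb : 0 <= n -> 0 < k -> 0 <= xb <= S -> xb * ((S - xb)/(n+1)) <= PP n k S xb.
Proof. intros. unfold PP. apply Rmult_le_compat_l; [lra|]. apply g_low1; lra. Qed.

Lemma PP_low2 n k S xb : 0 <= n -> 0 < k -> 0 <= xb -> xb * (S - xb - n*k) <= PP n k S xb.
Proof. intros. unfold PP. apply Rmult_le_compat_l; [lra|]. apply g_low2; lra. Qed.

Lemma necB n k m S x : 1 <= n -> 0 < k -> 0 < m -> m*m = n+1 ->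
  0 <= x -> opt n k S x -> 0 <= S - x <= (n+1)*k -> x = S/2 /\ S <= k*m*(m+1).
Proof.
  intros Hn Hk Hm Hmm Hx Hopt Hs. pose proof (m_gt1 n m Hn Hm Hmm) as Hm1.
  set (q := /(n+1)).
  assert (Hq : q * (m*m) = 1) by (unfold q; rewrite Hmm; field; lra).
  assert (Hq0 : 0 < q) by (unfold q; apply Rinv_0_lt_compat; lra).
  assert (HPx : PP n k S x = x * (S - x) * q) by (unfold PP; rewrite g_mid; [unfold Rdiv, q; ring|lra|lra|lra]).
  assert (H1 := Hopt (S/2) ltac:(lra)).
  pose proof (PP_low1 n k S (S/2) ltac:(lra) Hk ltac:(lra)) as H2.
  unfold Rdiv in H2 at 2; fold q in H2.
  assert (H3 : (S/2)*(S/2) * q <= x*(S-x)*q) by nra.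
  assert (H4 : (S/2)*(S/2) <= x*(S-x)) by (apply Rmult_le_reg_r with q; lra).
  pose proof (Rle_0_sqr (x - S/2)); unfold Rsqr in *.
  assert (Hxe : x = S/2) by nra.
  split; auto.
  destruct (Rle_dec S (n*k)); fn; [nra|].
  assert (H5 := Hopt ((S - n*k)/2) ltac:(lra)).
  pose proof (PP_low2 n k S ((S - n*k)/2) ltac:(lra) Hk ltac:(lra)) as H6.
  assert (H7 : (S - n*k)*(S - n*k) <= S*S*q) by (rewrite HPx, Hxe in H5; nra).
  assert (E: q*((m*(S-n*k))*(m*(S-n*k))) = (S-n*k)*(S-n*k)) by (transitivity ((q*(m*m))*((S-n*k)*(S-n*k))); [ring| rewrite Hq; ring]).
  assert (H8 : (m*(S-n*k))*(m*(S-n*k)) <= S*S).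
  { apply Rmult_le_reg_l with q; [lra|]. rewrite E. lra. }
  apply sq_le in H8; [|lra].
  assert (HH : (m-1)*S <= (m-1)*(k*m*(m+1))) by nra.
  apply Rmult_le_reg_l in HH; lra.
Qed.

Lemma necC n k m S x : 1 <= n -> 0 < k -> 0 < m -> m*m = n+1 ->
  0 <= x -> opt n k S x -> (n+1)*k <= S - x -> x = (S - n*k)/2 /\ k*m*(m+1) <= S.
Proof.
  intros Hn Hk Hm Hmm Hx Hopt Hs. pose proof (m_gt1 n m Hn Hm Hmm) as Hm1.
  set (q := /(n+1)).
  assert (Hq : q * (m*m) = 1) by (unfold q; rewrite Hmm; field; lra).
  assert (Hq0 : 0 < q) by (unfold q; apply Rinv_0_lt_compat; lra).
  assert (HPx : PP n k S x = x * (S - x - n*k)) by (unfold PP; rewrite g_hi; [ring|lra|lra|lra]).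
  assert (H1 := Hopt ((S - n*k)/2) ltac:(nra)).
  pose proof (PP_low2 n k S ((S - n*k)/2) ltac:(lra) Hk ltac:(nra)) as H2.
  pose proof (Rle_0_sqr (x - (S - n*k)/2)); unfold Rsqr in *.
  assert (Hxe : x = (S - n*k)/2) by nra.
  split; auto.
  assert (H5 := Hopt (S/2) ltac:(nra)).
  pose proof (PP_low1 n k S (S/2) ltac:(lra) Hk ltac:(nra)) as H6.
  unfold Rdiv in H6 at 2; fold q in H6.
  assert (H7 : S*S*q <= (S - n*k)*(S - n*k)) by (rewrite HPx, Hxe in H5; nra).
  assert (E: q*((m*(S-n*k))*(m*(S-n*k))) = (S-n*k)*(S-n*k)) by (transitivity ((q*(m*m))*((S-n*k)*(S-n*k))); [ring| rewrite Hq; ring]).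
  assert (H8 : S*S <= (m*(S-n*k))*(m*(S-n*k))).
  { apply Rmult_le_reg_l with q; [lra|]. rewrite E. lra. }
  apply sq_le in H8; [|nra].
  assert (HH : (m-1)*(k*m*(m+1)) <= (m-1)*S) by nra.
  apply Rmult_le_reg_l in HH; lra.
Qed.

Lemma necpos n k S x : 1 <= n -> 0 < k -> 0 <= x -> opt n k S x -> (x = 0 -> 0 < S) -> 0 < S - x.
Proof.
  intros Hn Hk Hx Hopt Hz.
  destruct (Rle_dec (S - x) 0) as [Hs|]; fn; [|lra].
  assert (HPx : PP n k S x = x * (S - x)) by (unfold PP; rewrite g_neg; [ring|lra|lra|lra]).
  destruct (Rle_dec S 0); fn.
  - assert (H1 := Hopt 0 ltac:(lra)). unfold PP at 1 in H1. rewrite HPx in H1.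
    destruct (Req_dec x 0) as [->|Hx0]; [specialize (Hz eq_refl); lra|]. nra.
  - assert (H1 := Hopt (S/2) ltac:(lra)).
    pose proof (PP_low1 n k S (S/2) ltac:(lra) Hk ltac:(lra)) as H2.
    assert (0 < (S/2) * ((S - S/2)/(n+1))).
    { apply Rmult_lt_0_compat; [lra|]. apply Rdiv_lt_0_compat; lra. }
    nra.
Qed.


Lemma div_le u d b : 0 < d -> u <= b*d -> u/d <= b.
Proof. intros. apply Rmult_le_reg_r with d; auto. unfold Rdiv; rewrite Rmult_assoc, Rinv_l; lra. Qed.
Lemma le_div u d b : 0 < d -> b*d <= u -> b <= u/d.
Proof. intros. apply Rmult_le_reg_r with d; auto. unfold Rdiv; rewrite Rmult_assoc, Rinv_l; lra. Qed.

Lemma memB M N beta C k m alpha : (1<=M)%nat -> (2<=N)%nat -> 0<beta -> 0<k -> 0<m ->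
  m*m = INR N+1 -> 0 <= (alpha-C)/beta -> (alpha-C)/beta <= (INR M+1)*(k*m*(m+1))/2 ->
  inX0 alpha beta C C k M N ((alpha-C)/beta/(INR M+1)).
Proof.
  intros HM HN Hb Hk Hm Hmm Ha0 Ha1.
  assert (HMr : 1 <= INR M) by (apply (le_INR 1); lia).
  assert (Hn : 2 <= INR N) by (apply (le_INR 2); lia).
  rewrite inX0_iff by auto.
  set (a := (alpha - C)/beta) in *. set (x := a/(INR M+1)).
  assert (Ha : a = (INR M + 1)*x) by (unfold x; field; lra).
  split; [nra|].
  replace (a - (INR M - 1)*x) with (2*x) by lra.
  pose proof (Bopt (INR N) k m (2*x) ltac:(lra) Hk Hm Hmm ltac:(nra)) as H.
  replace (2*x/2) with x in H by field. exact H.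
Qed.

Lemma memC M N beta C k m alpha : (1<=M)%nat -> (2<=N)%nat -> 0<beta -> 0<k -> 0<m ->
  m*m = INR N+1 ->
  ((INR M+1)*(k*m*(m+1)) - (INR M-1)*INR N*k)/2 <= (alpha-C)/beta ->
  inX0 alpha beta C C k M N (((alpha-C)/beta - INR N * k)/(INR M+1)) /\
  (INR N+1)*k <= (alpha-C)/beta - INR M * (((alpha-C)/beta - INR N * k)/(INR M+1)).
Proof.
  intros HM HN Hb Hk Hm Hmm Ha0.
  assert (HMr : 1 <= INR M) by (apply (le_INR 1); lia).
  assert (Hn : 2 <= INR N) by (apply (le_INR 2); lia).
  pose proof (m_gt1 (INR N) m ltac:(lra) Hm Hmm) as Hm1.
  rewrite inX0_iff by auto.
  set (a := (alpha - C)/beta) in *. set (x := (a - INR N * k)/(INR M+1)).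
  set (n := INR N) in *. set (Mr := INR M) in *.
  assert (Ha : a = n*k + (Mr + 1)*x) by (unfold x; field; lra).
  assert (HS : k*m*(m+1) <= n*k + 2*x).
  { rewrite Ha in Ha0.
    assert (HH: (Mr+1)*(k*m*(m+1)) <= (Mr+1)*(n*k + 2*x)) by lra.
    apply Rmult_le_reg_l in HH; lra. }
  assert (HSn : n*k <= k*m*(m+1)) by (replace n with (m*m - 1) by lra; nra).
  assert (HSb : (n+2)*k <= k*m*(m+1)) by (replace (n+2) with (m*m+1) by lra; nra).
  split; [split; [lra|]|lra].
  replace (a - (Mr - 1)*x) with (n*k + 2*x) by lra.
  pose proof (Copt n k m (n*k + 2*x) ltac:(lra) Hk Hm Hmm HS) as H.
  replace ((n * k + 2 * x - n * k) / 2) with x in H by field. exact H.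
Qed.

Lemma mem0 M N beta C k alpha : (1<=M)%nat -> (2<=N)%nat -> 0<beta -> 0<k ->
  (alpha-C)/beta <= 0 -> inX0 alpha beta C C k M N 0.
Proof.
  intros HM HN Hb Hk Ha.
  assert (Hn : 2 <= INR N) by (apply (le_INR 2); lia).
  rewrite inX0_iff by auto. split; [lra|].
  intros xb Hxb. unfold PP. rewrite Rmult_0_l.
  rewrite g_neg by lra. nra.
Qed.

Lemma cls M N beta C k m alpha x : (1<=M)%nat -> (2<=N)%nat -> 0<beta -> 0<k -> 0<m ->
  m*m = INR N+1 -> inX0 alpha beta C C k M N x ->
  0 <= x /\
  ((alpha-C)/beta - INR M * x <= 0 \/
   (0 <= (alpha-C)/beta - INR M * x <= (INR N+1)*k /\ (alpha-C)/beta = (INR M+1)*x /\ 2*x <= k*m*(m+1)) \/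
   ((INR N+1)*k <= (alpha-C)/beta - INR M * x /\ (alpha-C)/beta = INR N*k + (INR M+1)*x
      /\ k*m*(m+1) <= INR N*k + 2*x)) /\
  (0 < (alpha-C)/beta -> 0 < (alpha-C)/beta - INR M * x).
Proof.
  intros HM HN Hb Hk Hm Hmm HX.
  assert (HMr : 1 <= INR M) by (apply (le_INR 1); lia).
  assert (Hn : 2 <= INR N) by (apply (le_INR 2); lia).
  rewrite inX0_iff in HX by auto. destruct HX as [Hx Hopt].
  set (a := (alpha - C)/beta) in *.
  set (n := INR N) in *. set (Mr := INR M) in *.
  split; [auto|split].
  - destruct (Rle_dec (a - Mr*x) 0); fn; [left; auto|right].
    destruct (Rle_dec (a - Mr*x) ((n+1)*k)); fn.
    + left. destruct (necB n k m (a - (Mr-1)*x) x ltac:(lra) Hk Hm Hmm Hx Hopt ltac:(lra)). lra.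
    + right. destruct (necC n k m (a - (Mr-1)*x) x ltac:(lra) Hk Hm Hmm Hx Hopt ltac:(lra)). lra.
  - intros Ha. assert (H := necpos n k (a - (Mr-1)*x) x ltac:(lra) Hk Hx Hopt).
    assert (0 < a - (Mr - 1) * x - x) by (apply H; intros ->; lra). lra.
Qed.

Lemma div_ge u d b : 0 < d -> b <= u/d -> b*d <= u.
Proof. intros Hd H. apply Rmult_le_compat_r with (r := d) in H; [|lra].
  unfold Rdiv in H; rewrite Rmult_assoc, Rinv_l in H; lra. Qed.

Definition ybf (k : R) (N : nat) := k*(sqrt(INR N+1)+1)/(2*sqrt(INR N+1)).

Lemma alx beta C a : 0 < beta -> alpha_x (C + beta*a) beta C = a.
Proof. intros; unfold alpha_x; field; lra. Qed.

Lemma part_N M N beta C k : (1<=M)%nat -> (2<=N)%nat -> 0<beta -> 0<C -> 0<k ->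
       (ybf k N < k /\ P1 beta C C k M N (ybf k N) /\
        (forall y', y' < k -> P1 beta C C k M N y' -> y' = ybf k N)) /\
       (exists ab : R, 0 <= ab /\ P2up beta C C k M N (ybf k N) ab /\
          (forall ab', 0 <= ab' -> P2up beta C C k M N (ybf k N) ab' -> ab' = ab) /\
          exists al : R, al <= ab /\ P2low beta C C k M N al /\
            (forall al', al' <= ab -> P2low beta C C k M N al' -> al' = al) /\
            (forall alpha, 0 < alpha ->
               al <= alpha_x alpha beta C <= ab ->
               X0_card2 alpha beta C C k M N)).
Proof.
  intros HM HN Hb HC Hk.
  assert (HMr : 1 <= INR M) by (apply (le_INR 1); lia).
  assert (Hn : 2 <= INR N) by (apply (le_INR 2); lia).
  assert (Hm : 0 < sqrt (INR N + 1)) by (apply sqrt_lt_R0; lra).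
  assert (Hmm : sqrt (INR N + 1) * sqrt (INR N + 1) = INR N + 1) by (apply sqrt_sqrt; lra).
  unfold ybf.
  set (m := sqrt (INR N + 1)) in *.
  pose proof (m_gt1 (INR N) m ltac:(lra) Hm Hmm) as Hm1.
  set (n := INR N) in *. set (Mr := INR M) in *.
  set (ybar := k * (m + 1) / (2 * m)).
  set (Sst := k*m*(m+1)).
  assert (Hyb : ybar * (n+1) * 2 = Sst) by (unfold ybar, Sst; rewrite <- Hmm; field; lra).
  assert (Hyk : ybar < k).
  { unfold ybar. apply Rmult_lt_reg_r with (2*m); [lra|].
    unfold Rdiv; rewrite Rmult_assoc, Rinv_l; nra. }
  assert (Hy0 : 0 <= ybar) by (unfold ybar; apply Rmult_le_pos; [nra|left; apply Rinv_0_lt_compat; lra]).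
  assert (HSn : n*k <= Sst) by (unfold Sst; replace n with (m*m - 1) by lra; nra).
  assert (HSb : (n+2)*k <= Sst) by (unfold Sst; replace (n+2) with (m*m+1) by lra; nra).
  assert (HSp : 0 < Sst) by (unfold Sst; apply Rmult_lt_0_compat; nra).
  assert (HN0 : (0 < N)%nat) by lia.
  set (al := ((Mr+1)*Sst - (Mr-1)*n*k)/2).
  set (ab := (Mr+1)*Sst/2).
  assert (Hq1 : 0 <= (Mr-1)*(Sst - n*k)) by (apply Rmult_le_pos; lra).
  assert (Hq2 : 0 <= (Mr-1)*n*k) by (apply Rmult_le_pos; [apply Rmult_le_pos|]; lra).
  assert (Hal : 0 < al) by (unfold al; lra).
  assert (Halb : al <= ab) by (unfold al, ab; lra).
  assert (HP1 : P1 beta C C k M N ybar).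
  { intros j Hj y Hy. split.
    - intros [alpha [Ha [x [HX Hyj]]]]. rewrite yj0_eq in Hyj by auto.
      destruct (cls M N beta C k m alpha x HM HN Hb Hk Hm Hmm HX) as [Hx [Hc _]].
      fold n Mr in Hc, Hyj.
      set (a := (alpha - C)/beta) in *.
      destruct Hc as [H|[H|H]].
      + left. rewrite cl_neg in Hyj; [lra|]. apply div_le; lra.
      + left. rewrite <- Hyj. apply cl_le; auto. apply div_le; [lra|]. fold Sst in H. lra.
      + right. rewrite cl_hi in Hyj; auto. apply le_div; lra.
    - intros [Hy1|Hy1].
      + assert (0 <= beta*((Mr+1)*(n+1)*y)) by (repeat apply Rmult_le_pos; lra).
        exists (C + beta*((Mr+1)*(n+1)*y)). split; [lra|].
        assert (Ha : (C + beta * ((Mr + 1) * (n + 1) * y) - C)/beta = (Mr+1)*(n+1)*y) by (field; lra).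
        exists ((C + beta * ((Mr + 1) * (n + 1) * y) - C)/beta/(Mr+1)). split.
        * apply (memB M N beta C k m); auto; rewrite Ha; fold Mr. { repeat apply Rmult_le_pos; lra. } fold Sst.
          assert (HH : (n+1)*y <= (n+1)*ybar) by nra. nra.
        * rewrite yj0_eq by auto. fold n Mr. rewrite Ha.
          replace ((Mr + 1) * (n + 1) * y - Mr * ((Mr + 1) * (n + 1) * y / (Mr + 1))) with (y*(n+1)) by (field; lra).
          replace (y*(n+1)/(n+1)) with y by (field; lra). apply cl_mid; lra.
      + subst y. exists (C + beta*al). split; [nra|].
        assert (Ha : (C + beta * al - C)/beta = al) by (field; lra).
        destruct (memC M N beta C k m (C + beta*al) HM HN Hb Hk Hm Hmm) as [HX Hs];
          [rewrite Ha; fold n Mr Sst; unfold al; lra|].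
        eexists; split; [exact HX|]. rewrite yj0_eq by auto. apply cl_hi; auto. fold n Mr in Hs |- *. apply le_div; lra. }
  split; [split; [auto|split; [auto|]]|].
  { intros y' Hy' HP. destruct (Rtotal_order y' ybar) as [Hl|[He|Hg]]; auto.
    - exfalso. destruct (proj2 (HP1 0%nat HN0 ybar ltac:(lra)) (or_introl (Rle_refl _))) as [al0 Hex].
      destruct (proj1 (HP 0%nat HN0 ybar ltac:(lra)) (ex_intro _ al0 Hex)); lra.
    - exfalso. destruct (proj2 (HP 0%nat HN0 y' ltac:(lra)) (or_introl (Rle_refl _))) as [al0 Hex].
      destruct (proj1 (HP1 0%nat HN0 y' ltac:(lra)) (ex_intro _ al0 Hex)); lra. }
  assert (HP2 : P2up beta C C k M N ybar ab).
  { intros alpha Hα j Hj. unfold alpha_x. split.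
    - intros Ha. destruct (Rle_dec ((alpha - C)/beta) 0) as [H0|H0]; fn.
      + exists 0. split; [apply mem0; auto|]. rewrite yj0_eq by auto.
        rewrite cl_neg; [lra|]. fold n Mr. apply div_le; lra.
      + exists ((alpha - C)/beta/(INR M+1)). split; [apply (memB M N beta C k m); auto; fold Mr; unfold ab in Ha; lra|].
        rewrite yj0_eq by auto. fold n Mr.
        set (a := (alpha - C)/beta) in *. set (x := a/(Mr+1)).
        assert (Hax : a = (Mr+1)*x) by (unfold x; field; lra).
        apply cl_le; auto. apply div_le; [lra|].
        assert (HH : (Mr+1)*x <= (Mr+1)*(Sst/2)) by (unfold ab in Ha; lra).
        apply Rmult_le_reg_l in HH; lra.
    - intros [x [HX Hy]]. rewrite yj0_eq in Hy by auto.
      destruct (cls M N beta C k m alpha x HM HN Hb Hk Hm Hmm HX) as [Hx [Hc Hpos]].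
      fold n Mr Sst in Hc, Hy, Hpos.
      set (a := (alpha - C)/beta) in *.
      destruct (Rle_dec a 0); fn; [unfold ab; nra|].
      specialize (Hpos ltac:(lra)).
      destruct Hc as [H|[H|H]]; [lra| |].
      + unfold ab. nra.
      + rewrite cl_hi in Hy; auto; [lra|]. apply le_div; lra. }
  exists ab. split; [unfold ab; nra|]. split; [auto|]. split.
  { intros ab' Hab' HP. destruct (Rtotal_order ab' ab) as [Hl|[He|Hg]]; auto; exfalso.
    - pose proof (HP2 (C + beta*ab) ltac:(nra) 0%nat HN0) as H1.
      pose proof (HP (C + beta*ab) ltac:(nra) 0%nat HN0) as H2.
      rewrite alx in H1, H2 by auto. pose proof (proj2 H2 (proj1 H1 (Rle_refl _))). lra.
    - pose proof (HP2 (C + beta*ab') ltac:(nra) 0%nat HN0) as H1.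
      pose proof (HP (C + beta*ab') ltac:(nra) 0%nat HN0) as H2.
      rewrite alx in H1, H2 by auto. pose proof (proj2 H1 (proj1 H2 (Rle_refl _))). lra. }
  assert (HPl : P2low beta C C k M N al).
  { intros alpha Hα j Hj. unfold alpha_x. split.
    - intros Ha.
      destruct (memC M N beta C k m alpha HM HN Hb Hk Hm Hmm) as [HX Hs];
        [fold n Mr Sst; unfold al in Ha; lra|].
      eexists; split; [exact HX|]. rewrite yj0_eq by auto. fold n Mr in Hs |- *.
      apply cl_hi; auto. apply le_div; lra.
    - intros [x [HX Hy]]. rewrite yj0_eq in Hy by auto.
      apply cl_eq_k in Hy; auto. apply div_ge in Hy; [|fold n; lra].
      destruct (cls M N beta C k m alpha x HM HN Hb Hk Hm Hmm HX) as [Hx [Hc Hpos]].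
      fold n Mr Sst in Hc, Hy, Hpos.
      set (a := (alpha - C)/beta) in *.
      destruct Hc as [H|[H|H]].
      + nra.
      + exfalso. assert (Hxk : x = (n+1)*k) by nra.
        unfold Sst in H. rewrite Hxk in H. rewrite <- Hmm in H. nra.
      + unfold al. destruct H as [_ [H1 H2]]. rewrite H1.
        assert (HH : (Mr+1)*Sst <= (Mr+1)*(n*k + 2*x)) by (apply Rmult_le_compat_l; lra).
        lra. }
  exists al. split; [auto|]. split; [auto|]. split.
  { intros al' Hal' HP. destruct (Rtotal_order al' al) as [Hl|[He|Hg]]; auto; exfalso.
    - set (a0 := Rmax al' 0).
      assert (Ha0 : al' <= a0 /\ 0 <= a0 /\ a0 < al) by (unfold a0, Rmax; destruct Rle_dec; lra).
      assert (0 <= beta * a0) by (apply Rmult_le_pos; lra).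
      pose proof (HPl (C + beta*a0) ltac:(lra) 0%nat HN0) as H1.
      pose proof (HP (C + beta*a0) ltac:(lra) 0%nat HN0) as H2.
      rewrite alx in H1, H2 by auto. pose proof (proj2 H1 (proj1 H2 ltac:(lra))). lra.
    - assert (0 <= beta * al) by (apply Rmult_le_pos; lra).
      pose proof (HPl (C + beta*al) ltac:(lra) 0%nat HN0) as H1.
      pose proof (HP (C + beta*al) ltac:(lra) 0%nat HN0) as H2.
      rewrite alx in H1, H2 by auto. pose proof (proj2 H2 (proj1 H1 (Rle_refl _))). lra. }
  intros alpha Hα [Hla Hlb]. unfold alpha_x in Hla, Hlb.
  exists ((alpha - C)/beta/(Mr+1)), (((alpha - C)/beta - n*k)/(Mr+1)). split.
  { intros E. unfold Rdiv in E at 1 3. apply Rmult_eq_reg_r in E; [|apply Rinv_neq_0_compat; lra].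
    assert (0 < n*k) by nra. lra. }
  intros x. split.
  - intros HX.
    destruct (cls M N beta C k m alpha x HM HN Hb Hk Hm Hmm HX) as [Hx [Hc Hpos]].
    fold n Mr Sst in Hc, Hpos.
    set (a := (alpha - C)/beta) in *.
    specialize (Hpos ltac:(lra)).
    destruct Hc as [H|[H|H]]; [lra| |].
    + left. destruct H as [_ [H1 _]]. rewrite H1. field. lra.
    + right. destruct H as [_ [H1 _]]. rewrite H1. field. lra.
  - intros [->| ->].
    + apply (memB M N beta C k m); auto; fold Mr; unfold ab in Hlb; lra.
    + apply (memC M N beta C k m); auto; fold n Mr Sst; unfold al in Hla; lra.
Qed.


Theorem lemma7 (M : nat) (beta C c k : R) :
  (1 <= M)%nat -> 0 < beta -> 0 < C -> C <= c -> 0 < k ->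
  deltaC beta C c = 0 ->
  exists yb : nat -> R,
    (forall N : nat, (2 <= N)%nat ->
       (* (1): yb N is the unique threshold < k *)
       (yb N < k /\ P1 beta C c k M N (yb N) /\
        (forall y', y' < k -> P1 beta C c k M N y' -> y' = yb N)) /\
       (* (2) *)
       (exists ab : R, 0 <= ab /\ P2up beta C c k M N (yb N) ab /\
          (forall ab', 0 <= ab' -> P2up beta C c k M N (yb N) ab' -> ab' = ab) /\
          exists al : R, al <= ab /\ P2low beta C c k M N al /\
            (forall al', al' <= ab -> P2low beta C c k M N al' -> al' = al) /\
            (forall alpha, 0 < alpha ->
               al <= alpha_x alpha beta C <= ab ->
               X0_card2 alpha beta C c k M N))) /\
    (* yb N = (1 + O(1/sqrt N)) k/2 as N -> oo *)
    (exists K : R, exists N0 : nat, forall N : nat, (N0 <= N)%nat ->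
       Rabs (yb N / (k / 2) - 1) <= K / sqrt (INR N)).
Proof.
  intros HM Hb HC Hcc Hk HdC.
  assert (Hc : c = C).
  { unfold deltaC in HdC. assert (c - C = (c - C)/beta * beta) by (field; lra).
    rewrite HdC in H. lra. }
  subst c.
  exists (ybf k). split.
  - intros N HN. apply part_N; auto.
  - exists 1, 1%nat. intros N HN. unfold ybf.
    assert (Hn : 1 <= INR N) by (apply (le_INR 1); lia).
    assert (Hm : 0 < sqrt (INR N + 1)) by (apply sqrt_lt_R0; lra).
    assert (Hs : 0 < sqrt (INR N)) by (apply sqrt_lt_R0; lra).
    assert (Hle : sqrt (INR N) <= sqrt (INR N + 1)) by (apply sqrt_le_1_alt; lra).
    replace (k * (sqrt (INR N + 1) + 1) / (2 * sqrt (INR N + 1)) / (k / 2) - 1)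
      with (/ sqrt (INR N + 1)) by (field; lra).
    rewrite Rabs_pos_eq by (left; apply Rinv_0_lt_compat; lra).
    unfold Rdiv. rewrite Rmult_1_l. apply Rinv_le_contravar; lra.
Qed.
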